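(* Let $\mathfrak{S}=(\mathcal{X},\mathsf{S},\gamma,(\Lambda_{a})_{a\in\mathcal{A}})$ be a spectral decomposition system for the Euclidean space $\mathfrak{H}$, let $\varphi\colon\mathcal{X}\to\left]-\infty,+\infty\right]$ be proper, convex, and $\mathsf{S}$-invariant, and let $X\in\mathfrak{H}$. Then $\varphi\circ\gamma$ is differentiable at $X$ if and only if $\varphi$ is differentiable at $\gamma(X)$, in which case $\gamma(\nabla(\varphi\circ\gamma)(X))=\nabla\varphi(\gamma(X))$ and $\nabla(\varphi\circ\gamma)(X)=\Lambda_a(\nabla\varphi(\gamma(X)))$ for every $a\in\mathcal{A}_X$.
   Context: A Euclidean space is a finite-dimensional real inner product space; inner products are written $\langle\cdot,\cdot\rangle$ and norms $\|\cdot\|$. Let $\mathfrak{H}$ and $\mathcal{X}$ be Euclidean spaces, let $\mathsf{S}$ be a group acting on $\mathcal{X}$ by linear isometries, let $\gamma\colon\mathfrak{H}\to\mathcal{X}$, and let $(\Lambda_a)_{a\in\mathcal{A}}$ be a family of linear operators from $\mathcal{X}$ to $\mathfrak{H}$. The orbit of $x$ is $\mathsf{S}\cdot x=\{s\cdot x: s\in\mathsf{S}\}$; a map $f$ on $\mathcal{X}$ is $\mathsf{S}$-invariant if $f(s\cdot x)=f(x)$ for all $s,x$. The tuple is a spectral decomposition system for $\mathfrak{H}$ if: [A] every $\Lambda_a$ is an isometry; [B] there exists an $\mathsf{S}$-invariant $\tau\colon\mathcal{X}\to\mathcal{X}$ with $\tau(x)\in\mathsf{S}\cdot x$ for all $x$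 and $\gamma\circ\Lambda_a=\tau$ for all $a$; [C] for every $X\in\mathfrak{H}$ there is $a$ with $X=\Lambda_a\gamma(X)$; [D] $\langle X,Y\rangle\leq\langle\gamma(X),\gamma(Y)\rangle$ for all $X,Y\in\mathfrak{H}$. For $X\in\mathfrak{H}$, $\mathcal{A}_X=\{a\in\mathcal{A}: X=\Lambda_a\gamma(X)\}$. A function is proper if it never takes $-\infty$ and is finite somewhere; it is convex if the convexity inequality holds on its domain $\{f<+\infty\}$. *)

(* Defs.v *)
From HB Require Import structures.
From mathcomp Require Import all_boot all_order all_algebra.
From mathcomp Require Import reals constructive_ereal.
Set Implicit Arguments. Unset Strict Implicit. Unset Printing Implicit Defensive.
Import Order.TTheory GRing.Theory Num.Theory.
Local Open Scope ring_scope.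

Section Defs.
Variable R : realType.

(* An inner product on a real vector space.  A Euclidean space is a
   finite-dimensional (vectType) real vector space with such a product. *)
Definition inner_product (V : lmodType R) (ip : V -> V -> R) : Prop :=
  [/\ (forall x y, ip x y = ip y x),
      (forall (a : R) x y z, ip (a *: x + y) z = (a * ip x z + ip y z)%R),
      (forall x, (0 <= ip x x)%R) &
      (forall x, ip x x = 0%R -> x = 0)].

Definition ipnorm (V : lmodType R) (ip : V -> V -> R) (x : V) : R :=
  Num.sqrt (ip x x).

Definition is_linear_map (U V : lmodType R) (f : U -> V) : Prop :=
  forall (a : R) x y, f (a *: x + y) = a *: f x + f y.

Definition is_linear_isometry (U V : lmodType R) (ipU : U -> U -> R)
  (ipV : V -> V -> R) (f : U -> V) : Prop :=
  is_linear_map f /\ forall x, ipnorm ipV (f x) = ipnorm ipU x.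

Definition is_group (G : Type) (mul : G -> G -> G) (one : G) (inv : G -> G)
  : Prop :=
  [/\ (forall s t u, mul s (mul t u) = mul (mul s t) u),
      (forall s, mul one s = s) &
      (forall s, mul (inv s) s = one)].

Definition isometric_linear_action (G : Type) (mul : G -> G -> G) (one : G)
  (X : lmodType R) (ipX : X -> X -> R) (act : G -> X -> X) : Prop :=
  [/\ (forall x, act one x = x),
      (forall s t x, act (mul s t) x = act s (act t x)) &
      (forall s, is_linear_isometry ipX ipX (act s))].

Definition in_orbit (G : Type) (X : Type) (act : G -> X -> X) (x y : X) : Prop :=
  exists s, y = act s x.

Definition s_invariant (G : Type) (X : Type) (T : Type) (act : G -> X -> X)
  (f : X -> T) : Prop :=
  forall s x, f (act s x) = f x.

(* Spectral decomposition system (X, S, gamma, (Lambda_a)_a) for H: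
   conditions [A]-[D]. *)
Definition spectral_decomposition_system (H X : lmodType R)
  (ipH : H -> H -> R) (ipX : X -> X -> R) (G : Type) (act : G -> X -> X)
  (gamma : H -> X) (A : Type) (Lambda : A -> X -> H) : Prop :=
  [/\ (forall a, is_linear_isometry ipX ipH (Lambda a)),
      (exists tau : X -> X,
          [/\ s_invariant act tau,
              (forall x, in_orbit act x (tau x)) &
              (forall a x, gamma (Lambda a x) = tau x)]),
      (forall Y : H, exists a, Y = Lambda a (gamma Y)) &
      (forall Y Z : H, (ipH Y Z <= ipX (gamma Y) (gamma Z))%R)].

Definition proper_fun (X : Type) (f : X -> \bar R) : Prop :=
  (forall x, f x != -oo%E) /\ exists x, (f x < +oo)%E.

Definition convex_fun (X : lmodType R) (f : X -> \bar R) : Prop :=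
  forall x y (t : R), (f x < +oo)%E -> (f y < +oo)%E -> (0 <= t <= 1)%R ->
    (f (t *: x + (1 - t) *: y)%R <= t%:E * f x + (1 - t)%:E * f y)%E.

Definition is_gradient (V : lmodType R) (ip : V -> V -> R) (f : V -> \bar R)
  (x g : V) : Prop :=
  forall eps : R, (0 < eps)%R ->
    exists2 delta : R, (0 < delta)%R &
      forall h, (ipnorm ip h < delta)%R ->
        exists r0 r : R, [/\ f x = r0%:E, f (x + h) = r%:E &
          (`|r - r0 - ip g h| <= eps * ipnorm ip h)%R].

Definition differentiable_at (V : lmodType R) (ip : V -> V -> R)
  (f : V -> \bar R) (x : V) : Prop :=
  exists g, is_gradient ip f x g.

End Defs.

(* Main.v *)
Require Import Defs.
From HB Require Import structures.
From mathcomp Require Import all_boot all_order all_algebra.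
From mathcomp Require Import reals constructive_ereal.
From mathcomp Require Import ring lra.
Import Order.TTheory GRing.Theory Num.Theory.
Local Open Scope ring_scope.

Set Implicit Arguments. Unset Strict Implicit. Unset Printing Implicit Defensive.



Lemma ip0l (R : realType) (V : lmodType R) (ip : V -> V -> R)
  (hV : inner_product ip) z : ip 0 z = 0.
Proof.
case: hV => _ hl _ _.
have := hl 1 0 0 z; rewrite scale1r addr0 mul1r => h; lra.
Qed.

Lemma ipDl (R : realType) (V : lmodType R) (ip : V -> V -> R)
  (hV : inner_product ip) x y z : ip (x + y) z = ip x z + ip y z.
Proof. by case: hV => _ hl _ _; rewrite -[x]scale1r hl mul1r scale1r. Qed.

Lemma ipZl (R : realType) (V : lmodType R) (ip : V -> V -> R)
  (hV : inner_product ip) a x z : ip (a *: x) z = a * ip x z.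
Proof.
have h0 := ip0l hV z.
by case: hV => _ hl _ _; rewrite -[a *: x]addr0 hl h0 addr0.
Qed.

Lemma ipC (R : realType) (V : lmodType R) (ip : V -> V -> R)
  (hV : inner_product ip) x y : ip x y = ip y x.
Proof. by case: hV. Qed.

Lemma ipDr (R : realType) (V : lmodType R) (ip : V -> V -> R)
  (hV : inner_product ip) x y z : ip z (x + y) = ip z x + ip z y.
Proof. by rewrite !(ipC hV z) ipDl. Qed.

Lemma ipZr (R : realType) (V : lmodType R) (ip : V -> V -> R)
  (hV : inner_product ip) a x z : ip z (a *: x) = a * ip z x.
Proof. by rewrite !(ipC hV z) ipZl. Qed.

Lemma ip0r (R : realType) (V : lmodType R) (ip : V -> V -> R)
  (hV : inner_product ip) z : ip z 0 = 0.
Proof. by rewrite ipC // ip0l. Qed.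

Lemma ipNl (R : realType) (V : lmodType R) (ip : V -> V -> R)
  (hV : inner_product ip) x z : ip (- x) z = - ip x z.
Proof. by rewrite -scaleN1r ipZl // mulN1r. Qed.

Lemma ipNr (R : realType) (V : lmodType R) (ip : V -> V -> R)
  (hV : inner_product ip) x z : ip z (- x) = - ip z x.
Proof. by rewrite -scaleN1r ipZr // mulN1r. Qed.

Lemma ipBl (R : realType) (V : lmodType R) (ip : V -> V -> R)
  (hV : inner_product ip) x y z : ip (x - y) z = ip x z - ip y z.
Proof. by rewrite ipDl // ipNl. Qed.

Lemma ipBr (R : realType) (V : lmodType R) (ip : V -> V -> R)
  (hV : inner_product ip) x y z : ip z (x - y) = ip z x - ip z y.
Proof. by rewrite ipDr // ipNr. Qed.

Lemma ipxx_ge0 (R : realType) (V : lmodType R) (ip : V -> V -> R)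
  (hV : inner_product ip) x : 0 <= ip x x.
Proof. by case: hV. Qed.

Lemma ipxx_eq0 (R : realType) (V : lmodType R) (ip : V -> V -> R)
  (hV : inner_product ip) x : ip x x = 0 -> x = 0.
Proof. by case: hV => _ _ _; apply. Qed.

Lemma ipnorm_ge0 (R : realType) (V : lmodType R) (ip : V -> V -> R) x :
  0 <= ipnorm ip x.
Proof. exact: sqrtr_ge0. Qed.

Lemma ipnorm_sq (R : realType) (V : lmodType R) (ip : V -> V -> R)
  (hV : inner_product ip) x : ipnorm ip x ^+ 2 = ip x x.
Proof. by rewrite /ipnorm sqr_sqrtr // ipxx_ge0. Qed.

Lemma ipnorm_le (R : realType) (V W : lmodType R) (ip : V -> V -> R)
  (ip' : W -> W -> R) (hW : inner_product ip') x y :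
  ip x x <= ip' y y -> ipnorm ip x <= ipnorm ip' y.
Proof. by move=> h; rewrite /ipnorm ler_sqrt // ipxx_ge0. Qed.

Lemma ipnormZ (R : realType) (V : lmodType R) (ip : V -> V -> R)
  (hV : inner_product ip) a x : ipnorm ip (a *: x) = `|a| * ipnorm ip x.
Proof.
rewrite /ipnorm ipZl // ipZr // mulrA -expr2 sqrtrM ?sqrtr_sqr //.
by rewrite sqr_ge0.
Qed.

Lemma ipnorm0 (R : realType) (V : lmodType R) (ip : V -> V -> R)
  (hV : inner_product ip) : ipnorm ip 0 = 0.
Proof. by rewrite /ipnorm ip0l // sqrtr0. Qed.

Lemma ip_CS (R : realType) (V : lmodType R) (ip : V -> V -> R)
  (hV : inner_product ip) u v : ip u v <= ipnorm ip u * ipnorm ip v.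
Proof.
set a := ipnorm ip u; set b := ipnorm ip v.
have ha : 0 <= a := ipnorm_ge0 _ _. have hb : 0 <= b := ipnorm_ge0 _ _.
have ea : a ^+ 2 = ip u u := ipnorm_sq hV u.
have eb : b ^+ 2 = ip v v := ipnorm_sq hV v.
have := ipxx_ge0 hV (b *: u - a *: v).
rewrite !ipBl // !ipBr // !ipZl // !ipZr // (ipC hV v u) -ea -eb.
move=> h.
have [a0|apos] := eqVneq a 0.
  have : ip u u = 0 by rewrite -ea a0 expr0n.
  move/(ipxx_eq0 hV) => u0.
  have -> : ip u v = 0 by rewrite u0 ip0l.
  by rewrite mulr_ge0.
have [b0|bpos] := eqVneq b 0.
  have : ip v v = 0 by rewrite -eb b0 expr0n.
  move/(ipxx_eq0 hV) => v0.
  have -> : ip u v = 0 by rewrite v0 ip0r.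
  by rewrite mulr_ge0.
have hab : 0 < a * b by rewrite mulr_gt0 // lt0r ?apos ?bpos.
have : a * b * (ip u v) <= a * b * (a * b) by nra.
by rewrite ler_pM2l.
Qed.

Lemma ip_CSabs (R : realType) (V : lmodType R) (ip : V -> V -> R)
  (hV : inner_product ip) u v : `|ip u v| <= ipnorm ip u * ipnorm ip v.
Proof.
rewrite ler_norml ip_CS // andbT.
have := ip_CS hV (- u) v.
rewrite ipNl // /ipnorm ipNl // ipNr // opprK /ipnorm.
by rewrite lerNl.
Qed.



Lemma vec_small (R : realType) (V : lmodType R) (ip : V -> V -> R)
  (hV : inner_product ip) (w : V) :
  (forall eps : R, 0 < eps -> exists2 delta : R, 0 < delta &
     forall h, ipnorm ip h < delta -> ip w h <= eps * ipnorm ip h) -> w = 0.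
Proof.
move=> H; apply: (ipxx_eq0 hV); rewrite -(ipnorm_sq hV).
set n := ipnorm ip w.
have hn : 0 <= n := ipnorm_ge0 _ _.
have [n0|npos] := eqVneq n 0; first by rewrite n0 expr0n.
have hn' : 0 < n by rewrite lt0r npos.
have [delta hd Hd] := H (n / 2) (divr_gt0 hn' (ltr0Sn _ 1)).
have hn1 : 2 * (n + 1) != 0 by rewrite mulf_neq0 // lt0r_neq0 // ltr_wpDl.
pose t := delta / (2 * (n + 1)).
have ht : t * (2 * (n + 1)) = delta by rewrite /t divfK.
have tpos : 0 < t by rewrite /t divr_gt0 // mulr_gt0 // ltr_wpDl.
have hnorm : ipnorm ip (t *: w) = t * n by rewrite ipnormZ // gtr0_norm.
have := Hd (t *: w); rewrite hnorm ipZr // -(ipnorm_sq hV) -/n.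
have -> : n / 2 * (t * n) = t * n ^+ 2 / 2 by rewrite expr2; field.
move=> /(_ _) H1.
have : t * n < delta by nra.
move/H1 => H2.
have : 0 < t * n ^+ 2 by rewrite mulr_gt0 // exprn_gt0.
lra.
Qed.

Lemma grad_val (R : realType) (V : lmodType R) (ip : V -> V -> R)
  (hV : inner_product ip) (f : V -> \bar R) y0 g :
  is_gradient ip f y0 g -> exists r0 : R, f y0 = r0%:E.
Proof.
move=> hg; have [d hd Hd] := hg 1 ltr01.
have h0 : ipnorm ip 0 < d by rewrite ipnorm0.
have [r0 [r [h1 _ _]]] := Hd 0 h0.
by exists r0.
Qed.

Lemma grad_subgrad (R : realType) (V : lmodType R) (ip : V -> V -> R)
  (hV : inner_product ip) (f : V -> \bar R) y0 g (r0 : R) :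
  (forall y, f y != -oo%E) -> convex_fun f -> is_gradient ip f y0 g ->
  f y0 = r0%:E -> forall y, ((r0 + ip g (y - y0))%:E <= f y)%E.
Proof.
move=> hp hc hg hy0 y.
case E: (f y) => [r| |]; last 2 first.
- exact: leey.
- by have := hp y; rewrite E.
rewrite lee_fin; set d := y - y0.
apply/ler_addgt0Pr => e he.
set nd := ipnorm ip d.
have hnd : 0 <= nd := ipnorm_ge0 _ _.
have nd1 : nd + 1 != 0 by rewrite lt0r_neq0 // ltr_wpDl.
pose eps := e / (nd + 1).
have heps : eps * (nd + 1) = e by rewrite /eps divfK.
have epos : 0 < eps by rewrite /eps divr_gt0 // ltr_wpDl.
have [delta hd Hd] := hg eps epos.
have dn0 : delta + nd != 0 by rewrite lt0r_neq0 // ltr_wpDr.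
pose t := delta / (delta + nd).
have ht : t * (delta + nd) = delta by rewrite /t divfK.
have tpos : 0 < t by rewrite /t divr_gt0 // ltr_wpDr.
have t1 : t <= 1 by nra.
have hnorm : ipnorm ip (t *: d) = t * nd by rewrite ipnormZ // gtr0_norm.
have := Hd (t *: d); rewrite hnorm => /(_ _) H1.
have : t * nd < delta by nra.
move/H1 => [r0' [r1 [e0 e1 hr]]].
have er : r0' = r0 by move: e0; rewrite hy0 => -[].
rewrite er in hr.
have hconv := hc y y0 t; rewrite E hy0 ltry in hconv.
have : (0 <= t <= 1) by rewrite t1 ltW.
move/(hconv isT (ltry r0)).
have -> : t *: y + (1 - t) *: y0 = y0 + t *: d.
  by rewrite /d scalerBr scalerBl scale1r addrCA.
rewrite e1 -!EFinM -EFinD lee_fin => hc2.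
rewrite ipZr // in hr.
move: hr; rewrite ler_norml => /andP[hr1 _].
have : t * (r0 + ip g d) <= t * (r + e) by nra.
by rewrite ler_pM2l.
Qed.

Lemma subgrad_uniq (R : realType) (V : lmodType R) (ip : V -> V -> R)
  (hV : inner_product ip) (f : V -> \bar R) y0 g v (r0 : R) :
  is_gradient ip f y0 g -> f y0 = r0%:E ->
  (forall y, ((r0 + ip v (y - y0))%:E <= f y)%E) -> v = g.
Proof.
move=> hg hy0 hv; apply/eqP; rewrite -subr_eq0; apply/eqP.
apply: (vec_small hV) => eps heps.
have [delta hd Hd] := hg eps heps.
exists delta => // h hh.
have [r0' [r1 [e0 e1 hr]]] := Hd h hh.
have er : r0' = r0 by move: e0; rewrite hy0 => -[].
rewrite er in hr.
have eh : y0 + h - y0 = h by rewrite addrC addKr.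
have := hv (y0 + h); rewrite e1 lee_fin eh => h2.
move: hr; rewrite ler_norml => /andP[_ hr2].
rewrite ipBl //; lra.
Qed.

Lemma grad_uniq (R : realType) (V : lmodType R) (ip : V -> V -> R)
  (hV : inner_product ip) (f : V -> \bar R) y0 g1 g2 :
  is_gradient ip f y0 g1 -> is_gradient ip f y0 g2 -> g1 = g2.
Proof.
move=> h1 h2; apply/eqP; rewrite -subr_eq0; apply/eqP.
apply: (vec_small hV) => eps heps.
have he2 : 0 < eps / 2 by rewrite divr_gt0.
have [d1 hd1 Hd1] := h1 _ he2.
have [d2 hd2 Hd2] := h2 _ he2.
exists (Order.min d1 d2); first by rewrite lt_min hd1 hd2.
move=> h; rewrite lt_min => /andP[hh1 hh2].
have [a0 [a1 [e0 e1 ha]]] := Hd1 h hh1.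
have [b0 [b1 [f0 f1 hb]]] := Hd2 h hh2.
have er0 : b0 = a0 by move: f0; rewrite e0 => -[].
have er1 : b1 = a1 by move: f1; rewrite e1 => -[].
rewrite er0 er1 in hb.
move: ha hb; rewrite !ler_norml => /andP[ha1 ha2] /andP[hb1 hb2].
rewrite ipBl //; lra.
Qed.



Lemma lin0 (R : realType) (U V : lmodType R) (f : U -> V) :
  is_linear_map f -> f 0 = 0.
Proof.
move=> hf; have h := hf 1 0 0; rewrite scale1r addr0 scale1r in h.
by apply: (addrI (f 0)); rewrite addr0 -h.
Qed.

Lemma linD (R : realType) (U V : lmodType R) (f : U -> V) :
  is_linear_map f -> forall x y, f (x + y) = f x + f y.
Proof. by move=> hf x y; rewrite -[x]scale1r hf !scale1r. Qed.

Lemma linZ (R : realType) (U V : lmodType R) (f : U -> V) :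
  is_linear_map f -> forall a x, f (a *: x) = a *: f x.
Proof. by move=> hf a x; rewrite -[a *: x]addr0 hf (lin0 hf) addr0. Qed.

Lemma linB (R : realType) (U V : lmodType R) (f : U -> V) :
  is_linear_map f -> forall x y, f (x - y) = f x - f y.
Proof.
move=> hf x y; rewrite (linD hf) -scaleN1r (linZ hf) scaleN1r //.
Qed.

Lemma iso_ipsq (R : realType) (U V : lmodType R) (ipU : U -> U -> R)
  (ipV : V -> V -> R) (hU : inner_product ipU) (hV : inner_product ipV)
  (f : U -> V) : is_linear_isometry ipU ipV f ->
  forall x, ipV (f x) (f x) = ipU x x.
Proof.
by move=> [_ hn] x; rewrite -(ipnorm_sq hV) -(ipnorm_sq hU) hn.
Qed.

Lemma iso_ip (R : realType) (U V : lmodType R) (ipU : U -> U -> R)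
  (ipV : V -> V -> R) (hU : inner_product ipU) (hV : inner_product ipV)
  (f : U -> V) : is_linear_isometry ipU ipV f ->
  forall x y, ipV (f x) (f y) = ipU x y.
Proof.
move=> hf x y; have := iso_ipsq hU hV hf (x + y).
case: (hf) => hl _; rewrite (linD hl) !ipDl // !ipDr // !(iso_ipsq hU hV hf).
rewrite (ipC hV (f y)) (ipC hU y) => h; lra.
Qed.

Lemma grp_mulV (G : Type) (mul : G -> G -> G) (one : G) (inv : G -> G) :
  is_group mul one inv -> forall s, mul s (inv s) = one.
Proof.
move=> [hA h1 hV] s.
rewrite -[mul s (inv s)]h1 -(hV (inv s)) -hA [mul (inv s) (mul s _)]hA (hV s) h1 hV //.
Qed.

Lemma act_inv (R : realType) (X : lmodType R) (ipX : X -> X -> R)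
  (G : Type) (mul : G -> G -> G) (one : G) (inv : G -> G)
  (hG : is_group mul one inv) (act : G -> X -> X)
  (hact : isometric_linear_action mul one ipX act) s y :
  act s (act (inv s) y) = y.
Proof. by case: hact => h1 hm _; rewrite -hm (grp_mulV hG) h1. Qed.

Lemma gamma_sq (R : realType) (H X : lmodType R) (ipH : H -> H -> R)
  (ipX : X -> X -> R) (hH : inner_product ipH) (hX : inner_product ipX)
  (gamma : H -> X) (A : Type) (Lambda : A -> X -> H)
  (hLam : forall a, is_linear_isometry ipX ipH (Lambda a))
  (hC : forall Y, exists a, Y = Lambda a (gamma Y)) Y :
  ipX (gamma Y) (gamma Y) = ipH Y Y.
Proof.
have [a ha] := hC Y.
by rewrite {3 4}ha (iso_ipsq hX hH (hLam a)).
Qed.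

Lemma gamma_lip (R : realType) (H X : lmodType R) (ipH : H -> H -> R)
  (ipX : X -> X -> R) (hH : inner_product ipH) (hX : inner_product ipX)
  (gamma : H -> X) (A : Type) (Lambda : A -> X -> H)
  (hLam : forall a, is_linear_isometry ipX ipH (Lambda a))
  (hC : forall Y, exists a, Y = Lambda a (gamma Y))
  (hD : forall Y Z, ipH Y Z <= ipX (gamma Y) (gamma Z)) Y Z :
  ipX (gamma Y - gamma Z) (gamma Y - gamma Z) <= ipH (Y - Z) (Y - Z).
Proof.
rewrite !ipBl // !ipBr // !(gamma_sq hH hX hLam hC).
rewrite (ipC hX (gamma Z)) (ipC hH Z).
have := hD Y Z; lra.
Qed.

Lemma phi_gL (R : realType) (H X : lmodType R)
  (G : Type) (act : G -> X -> X)
  (gamma : H -> X) (A : Type) (Lambda : A -> X -> H) (tau : X -> X)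
  (hgt : forall a x, gamma (Lambda a x) = tau x)
  (taorb : forall x, Defs.in_orbit act x (tau x))
  (phi : X -> \bar R) (hinv : s_invariant act phi) a y :
  phi (gamma (Lambda a y)) = phi y.
Proof. by rewrite hgt; have [s ->] := taorb y; rewrite hinv. Qed.

Lemma tau_fix (R : realType) (H X : lmodType R) (ipH : H -> H -> R)
  (ipX : X -> X -> R) (hH : inner_product ipH) (hX : inner_product ipX)
  (G : Type) (mul : G -> G -> G) (one : G) (inv : G -> G)
  (hG : is_group mul one inv)
  (act : G -> X -> X) (hact : isometric_linear_action mul one ipX act)
  (gamma : H -> X) (A : Type) (Lambda : A -> X -> H) (tau : X -> X)
  (hLam : forall a, is_linear_isometry ipX ipH (Lambda a))
  (hgt : forall a x, gamma (Lambda a x) = tau x)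
  (taorb : forall x, Defs.in_orbit act x (tau x))
  (hD : forall Y Z, ipH Y Z <= ipX (gamma Y) (gamma Z))
  (phi : X -> \bar R) (hp : forall y, phi y != -oo%E) (hc : convex_fun phi)
  (hinv : s_invariant act phi) (x : H) (a : A) (g : X) :
  is_gradient ipX phi (gamma x) g -> x = Lambda a (gamma x) -> tau g = g.
Proof.
move=> hg hx.
have [r0 e0] := grad_val hX hg.
have sub := grad_subgrad hX hp hc hg e0.
have hi : ipX (gamma x) g <= ipX (gamma x) (tau g).
  have := hD x (Lambda a g); rewrite hgt {1}hx (iso_ip hX hH (hLam a)) //.
have [s hs] := taorb g.
apply: (subgrad_uniq hX hg e0) => y.
rewrite -(hinv (inv s) y).
apply: le_trans (sub _); rewrite lee_fin lerD2l !ipBr //.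
have -> : ipX (tau g) y = ipX g (act (inv s) y).
  rewrite hs -{1}(act_inv hG hact s y).
  by case: hact => _ _ /(_ s) hiso; rewrite (iso_ip hX hX hiso).
rewrite (ipC hX g (gamma x)) (ipC hX (tau g) (gamma x)); lra.
Qed.



Lemma back_grad (R : realType) (H X : lmodType R) (ipH : H -> H -> R)
  (ipX : X -> X -> R) (hH : inner_product ipH) (hX : inner_product ipX)
  (G : Type) (act : G -> X -> X)
  (gamma : H -> X) (A : Type) (Lambda : A -> X -> H) (tau : X -> X)
  (hLam : forall a, is_linear_isometry ipX ipH (Lambda a))
  (hgt : forall a x, gamma (Lambda a x) = tau x)
  (taorb : forall x, Defs.in_orbit act x (tau x))
  (hC : forall Y, exists a, Y = Lambda a (gamma Y))
  (hD : forall Y Z, ipH Y Z <= ipX (gamma Y) (gamma Z))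
  (phi : X -> \bar R) (hp : forall y, phi y != -oo%E) (hc : convex_fun phi)
  (hinv : s_invariant act phi) (x : H) (a : A) (g : X) :
  is_gradient ipX phi (gamma x) g -> x = Lambda a (gamma x) -> tau g = g ->
  is_gradient ipH (phi \o gamma) x (Lambda a g).
Proof.
move=> hg hx htg eps heps.
have [r0 e0] := grad_val hX hg.
have sub := grad_subgrad hX hp hc hg e0.
set ng := ipnorm ipX g.
have hng : 0 <= ng := ipnorm_ge0 _ _.
have ng1 : 32 * (ng + 1) != 0 by rewrite mulf_neq0 // lt0r_neq0 // ltr_wpDl.
pose eps2 := eps ^+ 2 / (32 * (ng + 1)).
have he2 : eps2 * (32 * (ng + 1)) = eps ^+ 2 by rewrite /eps2 divfK.
have e2pos : 0 < eps2 by rewrite /eps2 divr_gt0 ?exprn_gt0 // mulr_gt0 // ltr_wpDl.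
have he1 : 0 < eps / 2 by rewrite divr_gt0.
have [rho1 hr1 Hd1] := hg _ he1.
have [rho2 hr2 Hd2] := hg _ e2pos.
have ng2 : 2 * (ng + 1) != 0 by rewrite mulf_neq0 // lt0r_neq0 // ltr_wpDl.
pose t := rho2 / (2 * (ng + 1)).
have ht : t * (2 * (ng + 1)) = rho2 by rewrite /t divfK.
have tpos : 0 < t by rewrite /t divr_gt0 // mulr_gt0 // ltr_wpDl.
have te : 0 < t * eps / 6 by rewrite divr_gt0 // mulr_gt0.
exists (Order.min rho1 (t * eps / 6)); first by rewrite lt_min hr1 te.
move=> h; rewrite lt_min => /andP[hh1 hh2].
set nh := ipnorm ipH h.
have hnh : 0 <= nh := ipnorm_ge0 _ _.
set u := gamma (x + h).
set k0 := u - gamma x.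
have hk0 : ipnorm ipX k0 <= nh.
  apply: (ipnorm_le hH).
  have -> : h = (x + h) - x by rewrite addrC addKr.
  exact: (gamma_lip hH hX hLam hC hD).
have [r0' [r1 [f0 f1 hq1]]] := Hd1 k0 (le_lt_trans hk0 hh1).
have er : r0' = r0 by move: f0; rewrite e0 => -[].
rewrite er in hq1.
have ek : gamma x + k0 = u by rewrite /k0 addrC subrK.
rewrite ek in f1.
exists r0, r1; split => //=.
have [b hb] := hC (x + h).
set ga := Lambda a g; set gb := Lambda b g.
have F1 : ipH ga x = ipX g (gamma x).
  by rewrite {1}hx (iso_ip hX hH (hLam a)).
have F2 : ipH gb (x + h) = ipX g u.
  by rewrite {1}hb (iso_ip hX hH (hLam b)).
have F3 : ipH ga (x + h) <= ipX g u.
  by have := hD ga (x + h); rewrite /ga hgt htg.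
have F4 : ipH gb x <= ipX g (gamma x).
  by have := hD gb x; rewrite /gb hgt htg ipC.
set m := ipnorm ipH (gb - ga).
have hm : 0 <= m := ipnorm_ge0 _ _.
have CS1 : ipH (gb - ga) h <= m * nh := ip_CS hH _ _.
have m2 : m ^+ 2 = 2 * ipX g g - 2 * ipH gb ga.
  rewrite /m (ipnorm_sq hH) !ipBl // !ipBr // /ga /gb.
  rewrite (iso_ip hX hH (hLam b) g g) (iso_ip hX hH (hLam a) g g).
  by rewrite (ipC hH (Lambda a g) (Lambda b g)); ring.
have htg2 : ipnorm ipX (- (t *: g)) < rho2.
  rewrite -scaleNr ipnormZ // normrN gtr0_norm // -/ng; nra.
have [r0'' [r2 [g0 g1 hq2]]] := Hd2 _ htg2.
have er2 : r0'' = r0 by move: g0; rewrite e0 => -[].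
rewrite er2 in hq2.
set y := Lambda a (gamma x + - (t *: g)).
have := sub (gamma y).
rewrite /y (phi_gL hgt taorb hinv) g1 lee_fin -/y => hlow.
have hDb := hD gb y.
rewrite /gb hgt htg -/gb in hDb.
have hy : y = x + - t *: ga.
  have hl := hLam a; case: hl => hla _.
  by rewrite /y (linD hla) -scaleNr (linZ hla) -hx.
rewrite {1}hy ipDr // ipZr // in hDb.
rewrite ipBr // in hlow.
rewrite ipNr // ipZr // -(ipnorm_sq hX) -/ng in hq2.
rewrite -scaleNr ipnormZ // normrN (gtr0_norm tpos) -/ng in hq2.
move: hq2; rewrite ler_norml => /andP[_ hq2].
have ng2e : ipX g g = ng ^+ 2 by rewrite (ipnorm_sq hX).
have hdel : ipX g (gamma x) - ipH gb x <= ipH (gb - ga) h.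
  rewrite ipBl // -F1; move: F2 F3; rewrite !ipDr // => F2 F3; lra.
have key : t * (m ^+ 2 / 2) <= eps2 * t * ng + m * nh.
  rewrite m2 ng2e.
  have : t * (ng ^+ 2 - ipH gb ga) <= eps2 * (t * ng) + m * nh.
    have e3 : t * (ng ^+ 2 - ipH gb ga) = t * ng ^+ 2 - t * ipH gb ga by ring.
    rewrite e3. move: hDb; rewrite mulNr => hDb. lra.
  move=> h3.
  have -> : t * ((2 * ng ^+ 2 - 2 * ipH gb ga) / 2) = t * (ng ^+ 2 - ipH gb ga) by field.
  by rewrite -mulrA.
have e2ng : eps2 * ng <= eps ^+ 2 / 32.
  have : eps2 * ng * 32 <= eps ^+ 2 by nra.
  lra.
have hmle : m <= eps / 2.
  have k2 : t * (m ^+ 2 / 2) <= t * (eps ^+ 2 / 32) + m * (t * eps / 6).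
    have p1 : t * (eps2 * ng) <= t * (eps ^+ 2 / 32) by rewrite ler_pM2l.
    have p2 : m * nh <= m * (t * eps / 6) by rewrite ler_wpM2l // ltW.
    move: key; rewrite -[eps2 * t * ng]mulrA [eps2 * (t * ng)]mulrCA; lra.
  have k3 : m ^+ 2 / 2 <= eps ^+ 2 / 32 + m * eps / 6.
    have : t * (m ^+ 2 / 2) <= t * (eps ^+ 2 / 32 + m * eps / 6) by lra.
    by rewrite ler_pM2l.
  have [//|hlt] := lerP m (eps / 2).
  clear -k3 hlt hm heps; nra.
have q0 : 0 <= ipX g k0 - ipH ga h.
  rewrite /k0 ipBr //; move: F3; rewrite ipDr // F1; lra.
have q1 : ipX g k0 - ipH ga h <= m * nh.
  rewrite /k0 ipBr // -F2 ipDr // -F1; move: CS1; rewrite ipBl //; lra.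
move: hq1; rewrite ler_norml => /andP[hq1a hq1b].
rewrite ler_norml; apply/andP; split; nra.
Qed.



Lemma ip_suml (R : realType) (V : lmodType R) (ip : V -> V -> R)
  (hV : inner_product ip) n (F : 'I_n -> V) z :
  ip (\sum_(i < n) F i) z = \sum_(i < n) ip (F i) z.
Proof.
apply: (big_morph (fun v => ip v z)); first by move=> u v; rewrite ipDl.
exact: ip0l.
Qed.

Lemma riesz (R : realType) (X : vectType R) (ip : X -> X -> R)
  (hX : inner_product ip) (l : X -> R)
  (hl : forall a x y, l (a *: x + y) = a * l x + l y) :
  exists g, forall k, ip g k = l k.
Proof.
have l0 : l 0 = 0.
  have := hl 1 0 0; rewrite scale1r addr0 mul1r => h; lra.
have lD : forall x y, l (x + y) = l x + l y.
  by move=> x y; rewrite -[x]scale1r hl mul1r scale1r.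
have lZ : forall a x, l (a *: x) = a * l x.
  by move=> a x; rewrite -[a *: x]addr0 hl l0 addr0.
have lsum : forall n (F : 'I_n -> X), l (\sum_(i < n) F i) = \sum_(i < n) l (F i).
  by move=> n F; apply: (big_morph l lD l0).
set n := \dim (fullv : {vspace X}).
set e := vbasis (fullv : {vspace X}).
pose Q : 'M[R]_n := \matrix_(i, j) ip e`_i e`_j.
have ipe : forall (v : 'rV[R]_n) (j : 'I_n),
    ip (\sum_(i < n) v 0 i *: e`_i) e`_j = (v *m Q) 0 j.
  move=> v j; rewrite ip_suml // mxE; apply: eq_bigr => i _.
  by rewrite ipZl // mxE.
have hQ : Q \in unitmx.
  rewrite -row_free_unit; apply: inj_row_free => v hv.
  set w := \sum_(i < n) v 0 i *: e`_i.
  have hw : forall j : 'I_n, ip w e`_j = 0 by move=> j; rewrite ipe hv mxE.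
  have w0 : w = 0.
    apply: (ipxx_eq0 hX); rewrite {2}/w (ipC hX w) ip_suml //.
    by apply: big1 => i _; rewrite ipZl // ipC // hw mulr0.
  have := @freeP _ _ _ _ (basis_free (vbasisP (fullv : {vspace X}))) (fun i => v 0 i) w0.
  by move=> h0; apply/rowP => j; rewrite (h0 j) mxE.
pose lrow : 'rV[R]_n := \row_j l e`_j.
pose d := lrow *m invmx Q.
exists (\sum_(i < n) d 0 i *: e`_i) => k.
have hk := coord_vbasis (memvf k).
rewrite {2}hk lsum (ipC hX) {1}hk ip_suml //.
apply: eq_bigr => j _; rewrite ipZl // lZ; congr (_ * _).
by rewrite ipC // ipe /d mulmxKV // mxE.
Qed.

Unset Implicit Arguments.

Theorem corollary5p8 (R : realType)
  (H X : vectType R) (ipH : H -> H -> R) (ipX : X -> X -> R)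
  (hH : inner_product ipH) (hX : inner_product ipX)
  (G : Type) (mul : G -> G -> G) (one : G) (inv : G -> G)
  (hG : is_group mul one inv)
  (act : G -> X -> X) (hact : isometric_linear_action mul one ipX act)
  (gamma : H -> X) (A : Type) (Lambda : A -> X -> H)
  (hS : spectral_decomposition_system ipH ipX act gamma Lambda)
  (phi : X -> \bar R)
  (hprop : proper_fun phi) (hconv : convex_fun phi) (hinv : s_invariant act phi)
  (x : H) :
  (differentiable_at ipH (phi \o gamma) x <-> differentiable_at ipX phi (gamma x))
  /\ (forall (Gr : H) (gr : X),
        is_gradient ipH (phi \o gamma) x Gr ->
        is_gradient ipX phi (gamma x) gr ->
        gamma Gr = gr /\
        (forall a : A, x = Lambda a (gamma x) -> Gr = Lambda a gr)).
Proof.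
case: hS => hLam [tau [tinv taorb hgt]] hC hD.
case: hprop => hp _.
have [a0 ha0] := hC x.
have back : forall gr a, is_gradient ipX phi (gamma x) gr ->
    x = Lambda a (gamma x) -> is_gradient ipH (phi \o gamma) x (Lambda a gr).
  move=> gr a hgr ha.
  have htg := tau_fix hH hX hG hact hLam hgt taorb hD hp hconv hinv hgr ha.
  exact: (back_grad hH hX hLam hgt taorb hC hD hp hconv hinv hgr ha htg).
split; last first.
  move=> Gr gr hGr hgr.
  have htg := tau_fix hH hX hG hact hLam hgt taorb hD hp hconv hinv hgr ha0.
  split.
    by rewrite (grad_uniq hH hGr (back gr a0 hgr ha0)) hgt htg.
  by move=> a ha; exact: (grad_uniq hH hGr (back gr a hgr ha)).
split; last first.
  by move=> [gr hgr]; exists (Lambda a0 gr); exact: back.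
move=> [Gr hGr].
have [hla hln] := hLam a0.
have [g hg] := riesz hX (l := fun k => ipH Gr (Lambda a0 k))
  (fun a u v => ltac:(by rewrite /= hla ipDr // ipZr)).
exists g => eps heps.
have [d hd Hd] := hGr eps heps.
exists d => // h hh.
have hn : ipnorm ipH (Lambda a0 h) = ipnorm ipX h := hln h.
have hh' : ipnorm ipH (Lambda a0 h) < d by rewrite hn.
have [r0 [r [e0 e1 hr]]] := Hd (Lambda a0 h) hh'.
exists r0, r; split => //.
  rewrite -e1 /= -(phi_gL hgt taorb hinv a0 (gamma x + h)).
  by rewrite (linD hla) -ha0.
by rewrite hg -hn.
Qed.
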